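(* CR linearly simulates resolution: for every finite set of first-order clauses $S$ and every resolution derivation $\psi$ of a clause $c$ from $S$, there is a CR derivation (with all decision literals discharged) $\varphi$ of $c$ from $S$ such that the length (number of inferences) of $\varphi$ is $O(\text{length of }\psi)$ and the size (number of literals) of $\varphi$ is $O(\text{size of }\psi)$.
   Context: Terms, atoms, literals and clauses are first-order; a clause is a disjunction of literals with variables implicitly universally quantified; $\bar{\ell}$ denotes the dual of literal $\ell$; $\bot$ denotes the empty clause, with $\Gamma\vee\bot=\Gamma$. All inference rules operate modulo associativity and commutativity of disjunction, involutivity of negation, and neutrality of $\bot$; distinct clauses are kept variable-disjoint by renaming. A resolution derivation of $c$ from $S$ is a DAG whose leaves are clauses of $S$, whose sink is $c$, and whose internal nodes are obtained by: (Resolution) from $\Gamma\vee\ell$ and $\bar{\ell'}\vee\Delta$ infer $(\Gamma\vee\Delta)\sigma$ where $\sigma$ unifies $\ell,\ell'$; (Factoring) from $\ell_1\vee\ldots\vee\ell_n\vee\ell'_1\vee\ldots\vee\ell'_m$ infer $(\ell\vee\ell'_1\vee\ldots\vee\ell'_m)\sigma$ where $\sigma$ unifies $\ell_1,\ldots,\ell_n$ and $\ell=\ell_k\sigma$ for some $k$. A CR derivation of $c$ from $S$ is a DAG whose nodes are clauses, whose leaves are clauses of $S$ or (unit) decision literals $[\ell]$ (arbitrary literals assumed as hypotheses), whose sink is $c$, and whose internal nodes are obtained by: (Unit-propagating resolution) from unit clauses $\ell_1,\ldots,\ell_n$ and $\bar{\ell'_1}\vee\ldots\vee\bar{\ell'_n}\vee\ell$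 infer $\ell\sigma$, where $\sigma$ unifies $\ell_k,\ell'_k$ for all $k$; (Conflict) from $\ell$ and $\bar{\ell'}$ infer $\bot$, where $\sigma$ unifies $\ell,\ell'$; (Conflict-driven clause learning) from a derivation of $\bot$ using decision literals $[\ell_1],\ldots,[\ell_n]$ infer $(\bar{\ell_1}\sigma^1_1\vee\ldots\vee\bar{\ell_1}\sigma^1_{m_1})\vee\ldots\vee(\bar{\ell_n}\sigma^n_1\vee\ldots\vee\bar{\ell_n}\sigma^n_{m_n})$, discharging them, where $\sigma^k_j$ is the composition of the substitutions used on the $j$-th path from $\ell_k$ to $\bot$. A CR proof is a CR derivation in which all decision literals are discharged. *)

(* Defs.v *)
From Stdlib Require Import List Arith Permutation.
Import ListNotations.

Inductive fo_term : Type :=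
| Var (x : nat)
| Fn (f : nat) (args : list fo_term).

Record atom := mkAtom { pred : nat; atom_args : list fo_term }.

(** A literal is a polarity together with an atom; [dual] flips the polarity,
    so involutivity of negation holds definitionally. *)
Record literal := mkLit { pos : bool; atm : atom }.

Definition dual (l : literal) : literal := mkLit (negb (pos l)) (atm l).

(** A clause is a disjunction of literals, represented as a list and always
    compared modulo [Permutation] (associativity/commutativity); the empty
    clause [] is bottom (so neutrality of bottom is automatic). *)
Definition clause := list literal.

Definition substitution := nat -> fo_term.

Fixpoint tsubst (s : substitution) (t : fo_term) : fo_term :=
  match t with
  | Var x => s x
  | Fn f ts => Fn f (map (tsubst s) ts)
  end.

Definition asubst (s : substitution) (a : atom) : atom :=
  mkAtom (pred a) (map (tsubst s) (atom_args a)).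
Definition lsubst (s : substitution) (l : literal) : literal :=
  mkLit (pos l) (asubst s (atm l)).
Definition csubst (s : substitution) (C : clause) : clause := map (lsubst s) C.

Definition unifies (s : substitution) (l l' : literal) : Prop :=
  lsubst s l = lsubst s l'.

Fixpoint occurs (x : nat) (t : fo_term) : bool :=
  match t with
  | Var y => Nat.eqb x y
  | Fn _ ts => existsb (occurs x) ts
  end.
Definition occurs_lit (x : nat) (l : literal) : bool :=
  existsb (occurs x) (atom_args (atm l)).
Definition occurs_clause (x : nat) (C : clause) : bool :=
  existsb (occurs_lit x) C.

Definition variant_of (C D : clause) : Prop :=
  exists rho : nat -> nat, (forall x y, rho x = rho y -> x = y) /\
    Permutation (csubst (fun x => Var (rho x)) C) D.

(** * Resolution derivations
    A derivation (DAG) is a list of nodes; each node is a clause with a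
    justification whose premises are indices of earlier nodes. *)
Inductive res_just : Type :=
| RLeaf
| RRes (i j : nat) (s : substitution)
| RFact (i : nat) (s : substitution).

Definition res_deriv := list (clause * res_just).

Definition rcl (D : res_deriv) (k : nat) : clause := fst (nth k D ([], RLeaf)).
Definition rjst (D : res_deriv) (k : nat) : res_just := snd (nth k D ([], RLeaf)).

Definition res_premises (J : res_just) : list nat :=
  match J with
  | RLeaf => []
  | RRes i j _ => [i; j]
  | RFact i _ => [i]
  end.

Definition res_step_ok (S : list clause) (D : res_deriv) (k : nat) : Prop :=
  let C := rcl D k in
  match rjst D k with
  | RLeaf => exists C0, In C0 S /\ variant_of C0 C
  | RRes i j s =>
      i < k /\ j < k /\
      exists (Gam : clause) (l l' : literal) (Del : clause),
        Permutation (rcl D i) (Gam ++ [l]) /\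
        Permutation (rcl D j) (dual l' :: Del) /\
        unifies s l l' /\
        Permutation C (csubst s (Gam ++ Del))
  | RFact i s =>
      i < k /\
      exists (L L' : clause),
        L <> [] /\
        Permutation (rcl D i) (L ++ L') /\
        (forall a b, In a L -> In b L -> lsubst s a = lsubst s b) /\
        exists l, In l L /\ Permutation C (lsubst s l :: csubst s L')
  end.

Definition is_res_derivation (S : list clause) (c : clause) (D : res_deriv) : Prop :=
  D <> [] /\
  (forall k, k < length D -> res_step_ok S D k) /\
  (forall k1 k2 x, k1 < length D -> k2 < length D -> k1 <> k2 ->
     occurs_clause x (rcl D k1) = true -> occurs_clause x (rcl D k2) = false) /\
  (forall k, k < length D - 1 ->
     exists k', k' < length D /\ In k (res_premises (rjst D k'))) /\
  Permutation (rcl D (length D - 1)) c.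

Definition res_length (D : res_deriv) : nat :=
  length (filter (fun p => match snd p with RLeaf => false | _ => true end) D).
Definition res_size (D : res_deriv) : nat :=
  list_sum (map (fun p => length (fst p)) D).

Inductive cr_just : Type :=
| CLeaf
| CDecide
| CUnitProp (us : list nat) (j : nat) (s : substitution)
| CConflict (i j : nat) (s : substitution)
| CLearn (i : nat).

Definition cr_deriv := list (clause * cr_just).

Definition ccl (D : cr_deriv) (k : nat) : clause := fst (nth k D ([], CLeaf)).
Definition cjst (D : cr_deriv) (k : nat) : cr_just := snd (nth k D ([], CLeaf)).

Definition cr_premises (J : cr_just) : list nat :=
  match J with
  | CLeaf | CDecide => []
  | CUnitProp us j _ => us ++ [j]
  | CConflict i j _ => [i; j]
  | CLearn i => [i]
  end.

(** [open_paths D k] lists, for every path from a decision literal [l] to node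
    [k] that does not pass through a clause-learning inference (i.e. along
    which the decision is not yet discharged), the instance [l sigma] where
    sigma is the composition of the substitutions used on that path.  A node
    used in several premise positions of one inference is a single edge. *)
Fixpoint open_paths_f (fuel : nat) (D : cr_deriv) (k : nat) : list literal :=
  match fuel with
  | 0 => []
  | Datatypes.S f =>
      match cjst D k with
      | CLeaf => []
      | CDecide => ccl D k
      | CUnitProp us j s =>
          map (lsubst s) (flat_map (open_paths_f f D) (nodup Nat.eq_dec (us ++ [j])))
      | CConflict i j s =>
          map (lsubst s) (flat_map (open_paths_f f D) (nodup Nat.eq_dec [i; j]))
      | CLearn _ => []
      end
  end.

Definition open_paths (D : cr_deriv) (k : nat) : list literal :=
  open_paths_f (Datatypes.S k) D k.

Definition cr_step_ok (S : list clause) (D : cr_deriv) (k : nat) : Prop :=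
  let C := ccl D k in
  match cjst D k with
  | CLeaf => exists C0, In C0 S /\ variant_of C0 C
  | CDecide => exists l, C = [l]
  | CUnitProp us j s =>
      Forall (fun u => u < k) us /\ j < k /\
      exists (ls ls' : list literal) (R : clause),
        length R <= 1 /\
        Forall2 (fun u l => ccl D u = [l]) us ls /\
        Permutation (ccl D j) (map dual ls' ++ R) /\
        Forall2 (unifies s) ls ls' /\
        Permutation C (csubst s R)
  | CConflict i j s =>
      i < k /\ j < k /\
      exists l l', ccl D i = [l] /\ ccl D j = [dual l'] /\ unifies s l l' /\ C = []
  | CLearn i =>
      i < k /\ ccl D i = [] /\ variant_of (map dual (open_paths D i)) C
  end.

Definition is_cr_derivation (S : list clause) (c : clause) (D : cr_deriv) : Prop :=
  D <> [] /\
  (forall k, k < length D -> cr_step_ok S D k) /\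
  (forall k1 k2 x, k1 < length D -> k2 < length D -> k1 <> k2 ->
     occurs_clause x (ccl D k1) = true -> occurs_clause x (ccl D k2) = false) /\
  (forall k, k < length D - 1 ->
     exists k', k' < length D /\ In k (cr_premises (cjst D k'))) /\
  Permutation (ccl D (length D - 1)) c.

Definition is_cr_proof (S : list clause) (c : clause) (D : cr_deriv) : Prop :=
  is_cr_derivation S c D /\ open_paths D (length D - 1) = [].

Definition cr_length (D : cr_deriv) : nat :=
  length (filter (fun p => match snd p with CLeaf | CDecide => false | _ => true end) D).
Definition cr_size (D : cr_deriv) : nat :=
  list_sum (map (fun p => length (fst p)) D).

(* Main.v *)
Require Import Defs.
From Stdlib Require Import List Arith Permutation Lia Cantor.
Import ListNotations.

Fixpoint term_ind2 (P : fo_term -> Prop) (HV : forall x, P (Var x))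
  (HF : forall f ts, Forall P ts -> P (Fn f ts)) (t : fo_term) : P t :=
  match t with
  | Var x => HV x
  | Fn f ts => HF f ts ((fix go (l : list fo_term) : Forall P l :=
       match l with
       | [] => @Forall_nil _ P
       | u :: l' => @Forall_cons _ P u l' (term_ind2 P HV HF u) (go l')
       end) ts)
  end.

Fixpoint tmax (t : fo_term) : nat :=
  match t with Var x => x | Fn _ ts => list_max (map tmax ts) end.

Lemma in_le_list_max : forall l n, In n l -> n <= list_max l.
Proof.
  intros l n H. assert (H2 := proj1 (list_max_le l (list_max l)) (le_n _)).
  rewrite Forall_forall in H2. auto.
Qed.

Lemma occurs_tmax : forall t x, occurs x t = true -> x <= tmax t.
Proof.
  induction t using term_ind2; intros y Hy; simpl in *.
  - apply Nat.eqb_eq in Hy. lia.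
  - apply existsb_exists in Hy. destruct Hy as [u [Hu Hy]].
    rewrite Forall_forall in H. specialize (H u Hu y Hy).
    eapply Nat.le_trans; [exact H|]. apply in_le_list_max. apply in_map. auto.
Qed.

Definition lmax (l : literal) : nat := list_max (map tmax (atom_args (atm l))).
Definition cmax (C : clause) : nat := list_max (map lmax C).

Lemma occurs_cmax : forall C x, occurs_clause x C = true -> x <= cmax C.
Proof.
  intros C x H. unfold occurs_clause in H. apply existsb_exists in H.
  destruct H as [l [Hl H]]. unfold occurs_lit in H. apply existsb_exists in H.
  destruct H as [t [Ht H]]. apply occurs_tmax in H.
  eapply Nat.le_trans; [exact H|].
  eapply Nat.le_trans; [apply in_le_list_max; apply in_map; exact Ht|].
  apply in_le_list_max. apply (in_map lmax). exact Hl.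
Qed.

Lemma tsubst_ext : forall t s s', (forall x, occurs x t = true -> s x = s' x) ->
  tsubst s t = tsubst s' t.
Proof.
  induction t using term_ind2; intros s s' Hs; simpl in *.
  - apply Hs. apply Nat.eqb_refl.
  - f_equal. apply map_ext_in. intros u Hu. rewrite Forall_forall in H.
    apply H; auto. intros x Hx. apply Hs. apply existsb_exists. eauto.
Qed.

Lemma tsubst_comp : forall t s s',
  tsubst s (tsubst s' t) = tsubst (fun x => tsubst s (s' x)) t.
Proof.
  induction t using term_ind2; intros s s'; simpl; auto.
  f_equal. rewrite map_map. apply map_ext_in. intros u Hu.
  rewrite Forall_forall in H. auto.
Qed.

Lemma tsubst_id : forall t, tsubst Var t = t.
Proof.
  induction t using term_ind2; simpl; auto. f_equal.
  rewrite <- (map_id ts) at 2. apply map_ext_in. rewrite Forall_forall in H. auto.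
Qed.

Lemma occurs_tsubst : forall t s x, occurs x (tsubst s t) = true ->
  exists y, occurs y t = true /\ occurs x (s y) = true.
Proof.
  induction t using term_ind2; intros s y Hy; simpl in *.
  - exists x. rewrite Nat.eqb_refl. auto.
  - apply existsb_exists in Hy. destruct Hy as [u [Hu Hy]].
    apply in_map_iff in Hu. destruct Hu as [v [<- Hv]].
    rewrite Forall_forall in H. destruct (H v Hv s y Hy) as [z [Hz1 Hz2]].
    exists z. split; auto. apply existsb_exists. eauto.
Qed.

Lemma lsubst_ext : forall l s s', (forall x, occurs_lit x l = true -> s x = s' x) ->
  lsubst s l = lsubst s' l.
Proof.
  intros [p [q args]] s s' H. unfold lsubst, asubst. simpl. f_equal. f_equal.
  apply map_ext_in. intros t Ht. apply tsubst_ext. intros x Hx. apply H.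
  unfold occurs_lit. simpl. apply existsb_exists. eauto.
Qed.

Lemma lsubst_comp : forall l s s',
  lsubst s (lsubst s' l) = lsubst (fun x => tsubst s (s' x)) l.
Proof.
  intros [p [q args]] s s'. unfold lsubst, asubst. simpl. f_equal. f_equal.
  rewrite map_map. apply map_ext. intros. apply tsubst_comp.
Qed.

Lemma lsubst_id : forall l, lsubst Var l = l.
Proof.
  intros [p [q args]]. unfold lsubst, asubst. simpl. f_equal. f_equal.
  rewrite <- (map_id args) at 2. apply map_ext. apply tsubst_id.
Qed.

Lemma csubst_id : forall C, csubst (fun x => Var x) C = C.
Proof.
  intros C. unfold csubst. rewrite <- (map_id C) at 2. apply map_ext. apply lsubst_id.
Qed.

Lemma occurs_lsubst : forall l s x, occurs_lit x (lsubst s l) = true ->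
  exists y, occurs_lit y l = true /\ occurs x (s y) = true.
Proof.
  intros [p [q args]] s x H. unfold occurs_lit, lsubst, asubst in *. simpl in *.
  apply existsb_exists in H. destruct H as [u [Hu H]].
  apply in_map_iff in Hu. destruct Hu as [v [<- Hv]].
  destruct (occurs_tsubst v s x H) as [y [Hy1 Hy2]]. exists y. split; auto.
  apply existsb_exists. eauto.
Qed.

Lemma lsubst_dual : forall s l, lsubst s (dual l) = dual (lsubst s l).
Proof. reflexivity. Qed.

Lemma dual_dual : forall l, dual (dual l) = l.
Proof. intros [[] a]; reflexivity. Qed.

Lemma map_dual_dual : forall L, map dual (map dual L) = L.
Proof. intros L. rewrite map_map. rewrite <- (map_id L) at 2. apply map_ext. apply dual_dual. Qed.

Lemma occurs_lit_dual : forall x l, occurs_lit x (dual l) = occurs_lit x l.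
Proof. reflexivity. Qed.

Definition fr (M p x : nat) : nat := M + Cantor.to_nat (p, x).
Definition frs (M p : nat) : substitution := fun x => Var (fr M p x).
Definition dec (M y : nat) : nat := snd (Cantor.of_nat (y - M)).

Lemma dec_fr : forall M p x, dec M (fr M p x) = x.
Proof. intros. unfold dec, fr. replace (M + to_nat (p, x) - M) with (to_nat (p,x)) by lia.
  rewrite cancel_of_to. reflexivity. Qed.

Lemma tag_fr : forall M p x, fst (Cantor.of_nat (fr M p x - M)) = p.
Proof. intros. unfold fr. replace (M + to_nat (p, x) - M) with (to_nat (p,x)) by lia.
  rewrite cancel_of_to. reflexivity. Qed.

Definition mkS (M : nat) (tau sigma : substitution) : substitution :=
  fun y => if y <? M then tsubst tau (sigma y) else tau (dec M y).

Lemma mkS_fr : forall M tau sigma p l,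
  lsubst (mkS M tau sigma) (lsubst (frs M p) l) = lsubst tau l.
Proof.
  intros. rewrite lsubst_comp. apply lsubst_ext. intros x _. simpl.
  unfold mkS, frs, fr. replace (M + to_nat (p, x) <? M) with false.
  - fold (fr M p x). rewrite dec_fr. reflexivity.
  - symmetry. apply Nat.ltb_ge. lia.
Qed.

Definition lbounded (M : nat) (l : literal) := forall x, occurs_lit x l = true -> x < M.

Lemma mkS_low : forall M tau sigma l, lbounded M l ->
  lsubst (mkS M tau sigma) l = lsubst tau (lsubst sigma l).
Proof.
  intros. rewrite lsubst_comp. apply lsubst_ext. intros x Hx. unfold mkS.
  apply H in Hx. apply Nat.ltb_lt in Hx. rewrite Hx. reflexivity.
Qed.

Definition decl (M : nat) (sigma : substitution) (p : nat) (g : literal) : literal :=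
  dual (lsubst (frs M p) (lsubst sigma g)).

Lemma mkS_decl : forall M tau sigma sigma' p g,
  lsubst (mkS M tau sigma') (decl M sigma p g) = dual (lsubst tau (lsubst sigma g)).
Proof. intros. unfold decl. rewrite lsubst_dual, mkS_fr. reflexivity. Qed.

Lemma occurs_decl : forall M sigma p g x, occurs_lit x (decl M sigma p g) = true ->
  M <= x /\ fst (Cantor.of_nat (x - M)) = p.
Proof.
  intros. unfold decl in H. rewrite occurs_lit_dual in H.
  apply occurs_lsubst in H. destruct H as [y [_ H]]. simpl in H.
  apply Nat.eqb_eq in H. subst. split. unfold fr; lia. apply tag_fr.
Qed.

Fixpoint decls (M : nat) (sigma : substitution) (b : nat) (G : list literal) : list literal :=
  match G with [] => [] | g :: G' => decl M sigma b g :: decls M sigma (S b) G' end.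

Definition decs M sigma b G : cr_deriv := map (fun l => ([l], CDecide)) (decls M sigma b G).

Lemma decls_length : forall M s G b, length (decls M s b G) = length G.
Proof. induction G; simpl; auto. Qed.
Lemma decs_length : forall M s G b, length (decs M s b G) = length G.
Proof. intros. unfold decs. rewrite length_map. apply decls_length. Qed.

Lemma decls_nth : forall M s G b m, m < length G ->
  nth m (decls M s b G) (mkLit true (mkAtom 0 [])) = decl M s (b+m) (nth m G (mkLit true (mkAtom 0 []))).
Proof.
  induction G; intros b m Hm; simpl in *. lia.
  destruct m. rewrite Nat.add_0_r. reflexivity.
  rewrite IHG by lia. f_equal. lia.
Qed.

Lemma decls_map : forall M s G b (F : literal -> literal) (H : literal -> literal),
  (forall p g, In g G -> F (decl M s p g) = H g) -> map F (decls M s b G) = map H G.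
Proof.
  induction G; intros; simpl; auto. f_equal. apply H0; simpl; auto.
  apply IHG. intros; apply H0; simpl; auto.
Qed.

Lemma decls_Forall2 : forall M s G b (R : literal -> literal -> Prop),
  (forall p g, In g G -> R (decl M s p g) (dual g)) -> Forall2 R (decls M s b G) (map dual G).
Proof.
  induction G; intros; simpl; constructor. apply H; simpl; auto.
  apply IHG; intros; apply H; simpl; auto.
Qed.

Notation dflt := (@pair (list literal) cr_just [] CLeaf).

Lemma nth_mid : forall {A} (P Q R : list A) n d, length P <= n -> n < length P + length Q ->
  nth n (P ++ Q ++ R) d = nth (n - length P) Q d.
Proof. intros. rewrite app_nth2 by lia. rewrite app_nth1 by lia. reflexivity. Qed.

Lemma nth_at : forall {A} (P R : list A) x n d, n = length P -> nth n (P ++ x :: R) d = x.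
Proof. intros. subst. rewrite app_nth2 by lia. rewrite Nat.sub_diag. reflexivity. Qed.

Lemma decs_nth : forall M s G b m, m < length G ->
  nth m (decs M s b G) dflt = ([decl M s (b+m) (nth m G (mkLit true (mkAtom 0 [])))], CDecide).
Proof.
  intros. unfold decs.
  rewrite (nth_indep _ _ ([mkLit true (mkAtom 0 [])], CDecide)) by (rewrite length_map, decls_length; auto).
  rewrite (map_nth (fun l => ([l], CDecide))). rewrite decls_nth; auto.
Qed.

Lemma decs_cr_length : forall M s G b, cr_length (decs M s b G) = 0.
Proof. induction G; intros; simpl; auto. unfold cr_length, decs in *. simpl. apply IHG. Qed.

Lemma decs_cr_size : forall M s G b, cr_size (decs M s b G) = length G.
Proof. induction G; intros; simpl; auto. unfold cr_size, decs in *. simpl. rewrite IHG. auto. Qed.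

Lemma cr_length_app : forall D E, cr_length (D ++ E) = cr_length D + cr_length E.
Proof. intros. unfold cr_length. rewrite filter_app, length_app. auto. Qed.
Lemma cr_size_app : forall D E, cr_size (D ++ E) = cr_size D + cr_size E.
Proof. intros. unfold cr_size. rewrite map_app, list_sum_app. auto. Qed.

Definition PB (D : cr_deriv) := forall k p, In p (cr_premises (cjst D k)) -> p < k.

Lemma cjst_out : forall D k, length D <= k -> cjst D k = CLeaf.
Proof. intros. unfold cjst. rewrite nth_overflow; auto. Qed.

Lemma PB_of : forall S D, (forall k, k < length D -> cr_step_ok S D k) -> PB D.
Proof.
  intros S D H k p Hp. destruct (Nat.lt_ge_cases k (length D)) as [Hk|Hk].
  - specialize (H k Hk). unfold cr_step_ok in H. destruct (cjst D k); simpl in Hp.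
    + contradiction.
    + contradiction.
    + destruct H as [H1 [H2 _]]. apply in_app_or in Hp. destruct Hp as [Hp|[Hp|[]]].
      * rewrite Forall_forall in H1; auto.
      * subst; auto.
    + destruct H as [H1 [H2 _]]. destruct Hp as [Hp|[Hp|[]]]; subst; auto.
    + destruct H as [H1 _]. destruct Hp as [Hp|[]]; subst; auto.
  - rewrite cjst_out in Hp by auto. simpl in Hp. contradiction.
Qed.

Lemma flat_map_ext_in : forall {A B} (f g : A -> list B) l,
  (forall x, In x l -> f x = g x) -> flat_map f l = flat_map g l.
Proof. induction l; intros; simpl; auto. rewrite H by (simpl; auto). f_equal. apply IHl.
  intros; apply H; simpl; auto. Qed.

Lemma op_fuel : forall D, PB D -> forall n f f' k, k < n -> k < f -> k < f' ->
  open_paths_f f D k = open_paths_f f' D k.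
Proof.
  intros D HPB n. induction n; intros f f' k Hn Hf Hf'. lia.
  destruct f as [|f]; [lia|]. destruct f' as [|f']; [lia|]. cbn [open_paths_f].
  assert (HP := HPB k). destruct (cjst D k); auto; f_equal;
    apply flat_map_ext_in; intros p Hp; apply nodup_In in Hp; apply HP in Hp;
    apply IHn; lia.
Qed.

Lemma op_unfold : forall D k, PB D -> open_paths D k =
  match cjst D k with
  | CLeaf => []
  | CDecide => ccl D k
  | CUnitProp us j s => map (lsubst s) (flat_map (open_paths D) (nodup Nat.eq_dec (us ++ [j])))
  | CConflict i j s => map (lsubst s) (flat_map (open_paths D) (nodup Nat.eq_dec [i; j]))
  | CLearn _ => []
  end.
Proof.
  intros D k HPB. unfold open_paths at 1. cbn [open_paths_f]. assert (HP := HPB k).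
  destruct (cjst D k); auto; f_equal;
    apply flat_map_ext_in; intros p Hp; apply nodup_In in Hp; apply HP in Hp;
    unfold open_paths; apply (op_fuel D HPB (S k)); lia.
Qed.

Lemma ccl_app : forall D E k, k < length D -> ccl (D ++ E) k = ccl D k.
Proof. intros. unfold ccl. rewrite app_nth1; auto. Qed.
Lemma cjst_app : forall D E k, k < length D -> cjst (D ++ E) k = cjst D k.
Proof. intros. unfold cjst. rewrite app_nth1; auto. Qed.

Lemma opf_app : forall D E, PB D -> forall f k, k < length D ->
  open_paths_f f (D ++ E) k = open_paths_f f D k.
Proof.
  intros D E HPB f. induction f; intros k Hk; cbn [open_paths_f]; auto.
  rewrite cjst_app by auto. assert (HP := HPB k).
  destruct (cjst D k); auto.
  - apply ccl_app; auto.
  - f_equal. apply flat_map_ext_in; intros p Hp; apply nodup_In in Hp; apply HP in Hp;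
    apply IHf; lia.
  - f_equal. apply flat_map_ext_in; intros p Hp; apply nodup_In in Hp; apply HP in Hp;
    apply IHf; lia.
Qed.

Lemma op_app : forall D E k, PB D -> k < length D -> open_paths (D ++ E) k = open_paths D k.
Proof. intros. apply opf_app; auto. Qed.

Lemma step_ok_app : forall S D E k, PB D -> k < length D -> cr_step_ok S D k ->
  cr_step_ok S (D ++ E) k.
Proof.
  intros S D E k HPB Hk H. unfold cr_step_ok in *. rewrite cjst_app, ccl_app by auto.
  destruct (cjst D k) eqn:Ej; auto.
  - destruct H as [H1 [H2 [ls [ls' [R [H3 [H4 H5]]]]]]].
    split; auto. split; auto. exists ls, ls', R. split; auto. split.
    + clear H5 Ej. induction H4; constructor; inversion H1; subst.
      rewrite ccl_app by lia. auto. auto.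
    + rewrite ccl_app by lia. auto.
  - destruct H as [H1 [H2 H3]]. split; auto. split; auto.
    rewrite !ccl_app by lia. auto.
  - destruct H as [H1 [H2 H3]]. split; auto. rewrite ccl_app by lia. split; auto.
    rewrite op_app by (auto; lia). auto.
Qed.

Lemma nodup_perm : forall l l', NoDup l' -> (forall x, In x l <-> In x l') ->
  Permutation (nodup Nat.eq_dec l) l'.
Proof.
  intros. apply NoDup_Permutation; auto. apply NoDup_nodup.
  intros x. rewrite nodup_In. auto.
Qed.

Lemma NoDup_seq_app : forall n a x, x < a -> NoDup (seq a n ++ [x]).
Proof.
  induction n; intros a x Hx; simpl. constructor; auto. constructor.
  constructor. intros H. apply in_app_or in H. destruct H as [H|[H|[]]].
  apply in_seq in H. lia. lia. apply IHn. lia.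
Qed.

Lemma flat_map_nil : forall {A B} (f : A -> list B) l, (forall x, In x l -> f x = []) ->
  flat_map f l = [].
Proof. induction l; intros; simpl; auto. rewrite H by (simpl; auto). apply IHl.
  intros; apply H; simpl; auto. Qed.

Definition aux_vars (M p : nat) (C : clause) :=
  forall x, occurs_clause x C = true -> M <= x /\ fst (Cantor.of_nat (x - M)) = p.

Definition is_main (D : cr_deriv) (k : nat) :=
  cjst D k = CLeaf \/ exists q, cjst D k = CLearn q.

Definition Inv (S : list clause) (psi : res_deriv) (M n : nat) (D : cr_deriv) (pos : nat -> nat) : Prop :=
  (forall k, k < length D -> cr_step_ok S D k) /\
  (forall k, k < n -> pos k < length D /\ ccl D (pos k) = rcl psi k /\ is_main D (pos k)) /\
  (forall p, p < length D -> (exists k, k < n /\ p = pos k) \/ aux_vars M p (ccl D p)) /\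
  (forall p, p < length D -> (exists k, k < n /\ p = pos k) \/
        exists p', p' < length D /\ In p (cr_premises (cjst D p'))) /\
  (forall k', k' < n -> forall i, In i (res_premises (rjst psi k')) ->
        exists p', p' < length D /\ In (pos i) (cr_premises (cjst D p'))) /\
  (0 < n -> pos (n-1) = length D - 1) /\
  cr_length D <= 3 * res_length (firstn n psi) /\
  cr_size D <= 3 * res_size (firstn n psi).

Lemma firstn_S_nth : forall {A} (l : list A) n d, n < length l ->
  firstn (S n) l = firstn n l ++ [nth n l d].
Proof.
  induction l; intros n d Hn; simpl in *. lia.
  destruct n. reflexivity. simpl. rewrite IHl with (d := d) by lia. reflexivity.
Qed.

Lemma res_length_app : forall D E, res_length (D ++ E) = res_length D + res_length E.
Proof. intros. unfold res_length. rewrite filter_app, length_app. auto. Qed.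
Lemma res_size_app : forall D E, res_size (D ++ E) = res_size D + res_size E.
Proof. intros. unfold res_size. rewrite map_app, list_sum_app. auto. Qed.

Definition upd (pos : nat -> nat) (n q : nat) := fun k => if k =? n then q else pos k.

Lemma extend : forall SS psi M n D pos B,
  n < length psi ->
  (forall k' i, k' < length psi -> In i (res_premises (rjst psi k')) -> i < k') ->
  Inv SS psi M n D pos ->
  let D' := D ++ B in
  let q := length D' - 1 in
  B <> [] ->
  (forall p, length D <= p < length D' -> cr_step_ok SS D' p) ->
  ccl D' q = rcl psi n -> is_main D' q ->
  (forall p, length D <= p < q -> aux_vars M p (ccl D' p)) ->
  (forall p, length D <= p < q -> exists p', p' < length D' /\ In p (cr_premises (cjst D' p'))) ->
  (forall i, In i (res_premises (rjst psi n)) -> exists p', p' < length D' /\ In (pos i) (cr_premises (cjst D' p'))) ->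
  cr_length B <= 3 * res_length [nth n psi ([], RLeaf)] ->
  cr_size B <= 3 * res_size [nth n psi ([], RLeaf)] ->
  Inv SS psi M (S n) D' (upd pos n q).
Proof.
  intros SS psi M n D pos B Hn Hlt [I1 [I2 [I3 [I4 [I5 [I6 [I7 I8]]]]]]] D' q HB Hok Hccl Hmain Haux Hcov Hprem Hl Hs.
  assert (HPB : PB D) by (eapply PB_of; eauto).
  assert (HlenB : length B > 0) by (destruct B; simpl; [congruence|lia]).
  assert (HlenD' : length D' = length D + length B) by (unfold D'; apply length_app).
  assert (Hq : q = length D + length B - 1) by (unfold q; lia).
  assert (Hpos : forall k, k < n -> upd pos n q k = pos k).
  { intros k Hk. unfold upd. replace (k =? n) with false; auto. symmetry; apply Nat.eqb_neq; lia. }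
  assert (Hposn : upd pos n q n = q) by (unfold upd; rewrite Nat.eqb_refl; auto).
  split; [|split; [|split; [|split; [|split; [|split; [|split]]]]]].
  - intros k Hk. destruct (Nat.lt_ge_cases k (length D)).
    + apply step_ok_app; auto.
    + apply Hok; lia.
  - intros k Hk. destruct (Nat.eq_dec k n) as [->|Hkn].
    + rewrite Hposn. repeat split; auto. lia.
    + rewrite Hpos by lia. destruct (I2 k ltac:(lia)) as [J1 [J2 J3]].
      split. lia. split. unfold D'; rewrite ccl_app; auto.
      unfold is_main, D' in *. rewrite cjst_app; auto.
  - intros p Hp. destruct (Nat.lt_ge_cases p (length D)).
    + destruct (I3 p H) as [[k [Hk ->]]|Ha].
      * left. exists k. split. lia. rewrite Hpos; auto.
      * right. unfold D'. rewrite ccl_app; auto.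
    + destruct (Nat.eq_dec p q) as [->|Hpq].
      * left. exists n. split; auto.
      * right. apply Haux. lia.
  - intros p Hp. destruct (Nat.lt_ge_cases p (length D)).
    + destruct (I4 p H) as [[k [Hk ->]]|[p' [Hp' Hin]]].
      * left. exists k. split. lia. rewrite Hpos; auto.
      * right. exists p'. split. lia. unfold D'. rewrite cjst_app; auto.
    + destruct (Nat.eq_dec p q) as [->|Hpq].
      * left. exists n. split; auto.
      * right. apply Hcov. lia.
  - intros k' Hk' i Hi. destruct (Nat.eq_dec k' n) as [->|Hkn].
    + rewrite Hpos by auto. apply Hprem; auto.
    + assert (i < k') by (apply (Hlt k'); auto; lia).
      rewrite Hpos by lia. destruct (I5 k' ltac:(lia) i Hi) as [p' [Hp' Hin]].
      exists p'. split. lia. unfold D'. rewrite cjst_app; auto.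
  - intros _. simpl. rewrite Nat.sub_0_r, Hposn. auto.
  - rewrite (@firstn_S_nth (clause * res_just) psi n ([], RLeaf)) by auto. rewrite res_length_app.
    unfold D'. rewrite cr_length_app. lia.
  - rewrite (@firstn_S_nth (clause * res_just) psi n ([], RLeaf)) by auto. rewrite res_size_app.
    unfold D'. rewrite cr_size_app. lia.
Qed.

Definition Mof (psi : res_deriv) : nat := S (list_max (map (fun p => cmax (fst p)) psi)).

Lemma Mof_bound : forall psi k x, k < length psi -> occurs_clause x (rcl psi k) = true -> x < Mof psi.
Proof.
  intros. apply occurs_cmax in H0. unfold Mof. unfold rcl in H0.
  assert (cmax (fst (nth k psi ([], RLeaf))) <= list_max (map (fun p => cmax (fst p)) psi)).
  { apply in_le_list_max. apply (in_map (fun p => cmax (fst p))). apply nth_In; auto. }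
  lia.
Qed.

Lemma main_op : forall D k, PB D -> is_main D k -> open_paths D k = [].
Proof.
  intros D k HPB [H|[q H]]; rewrite op_unfold by auto; rewrite H; auto.
Qed.

Lemma leaf_case : forall SS psi n D pos,
  n < length psi ->
  (forall k' i, k' < length psi -> In i (res_premises (rjst psi k')) -> i < k') ->
  Inv SS psi (Mof psi) n D pos -> rjst psi n = RLeaf -> res_step_ok SS psi n ->
  exists D' pos', Inv SS psi (Mof psi) (S n) D' pos'.
Proof.
  intros SS psi n D pos Hn Hlt HI Hj Hok.
  exists (D ++ [(rcl psi n, CLeaf)]), (upd pos n (length (D ++ [(rcl psi n, CLeaf)]) - 1)).
  assert (Hq : length (D ++ [(rcl psi n, CLeaf)]) - 1 = length D) by (rewrite length_app; simpl; lia).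
  assert (Hc : ccl (D ++ [(rcl psi n, CLeaf)]) (length D) = rcl psi n) by (unfold ccl; rewrite nth_at; auto).
  assert (Hj' : cjst (D ++ [(rcl psi n, CLeaf)]) (length D) = CLeaf) by (unfold cjst; rewrite nth_at; auto).
  apply extend; auto.
  - discriminate.
  - intros p Hp. rewrite length_app in Hp; simpl in Hp. replace p with (length D) by lia.
    unfold cr_step_ok. rewrite Hj', Hc. unfold res_step_ok in Hok. rewrite Hj in Hok. auto.
  - rewrite Hq. auto.
  - rewrite Hq. left. auto.
  - rewrite Hq. intros; lia.
  - rewrite Hq. intros; lia.
  - rewrite Hj. simpl. tauto.
  - unfold cr_length. simpl. lia.
  - unfold cr_size, res_size. simpl. unfold rcl, clause in *. lia.
Qed.

Definition dl : literal := mkLit true (mkAtom 0 []).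

Lemma nth_skip : forall {A} (P R : list A) k d, nth (length P + k) (P ++ R) d = nth k R d.
Proof. intros. rewrite app_nth2 by lia. f_equal. lia. Qed.

Lemma seq_decls_F2 : forall M s (f : nat -> list literal) G c,
  (forall m, m < length G -> f (c+m) = [decl M s (c+m) (nth m G dl)]) ->
  Forall2 (fun u l => f u = [l]) (seq c (length G)) (decls M s c G).
Proof.
  induction G; intros c H; simpl; constructor.
  - specialize (H 0). rewrite Nat.add_0_r in H. apply H. simpl; lia.
  - apply IHG. intros m Hm. specialize (H (S m)). simpl in H.
    replace (S c + m) with (c + S m) by lia. apply H. lia.
Qed.

Lemma seq_decls_fm : forall M s (f : nat -> list literal) G c,
  (forall m, m < length G -> f (c+m) = [decl M s (c+m) (nth m G dl)]) ->
  flat_map f (seq c (length G)) = decls M s c G.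
Proof.
  induction G; intros c H; simpl; auto.
  assert (H0 := H 0). rewrite Nat.add_0_r in H0. rewrite H0 by (simpl; lia). simpl. f_equal.
  apply IHG. intros m Hm. specialize (H (S m)). simpl in H.
  replace (S c + m) with (c + S m) by lia. apply H. lia.
Qed.

Lemma repeat_F2 : forall {A B} (R : A -> B -> Prop) (x : A) (L : list B),
  (forall y, In y L -> R x y) -> Forall2 R (repeat x (length L)) L.
Proof. induction L; intros; simpl; constructor; auto. apply H; simpl; auto.
  apply IHL; intros; apply H; simpl; auto. Qed.

Lemma bounded_of : forall psi i C g, i < length psi -> Permutation (rcl psi i) C -> In g C ->
  lbounded (Mof psi) g.
Proof.
  intros psi i C g Hi HP Hg x Hx. apply (Mof_bound psi i); auto.
  unfold occurs_clause. apply existsb_exists. exists g. split; auto.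
  apply Permutation_in with C; auto. apply Permutation_sym; auto.
Qed.

Lemma occ_single : forall x l, occurs_clause x [l] = occurs_lit x l.
Proof. intros. unfold occurs_clause. simpl. apply Bool.orb_false_r. Qed.

Lemma variant_id : forall X C, Permutation X C -> variant_of X C.
Proof. intros. exists (fun x => x). split; auto. rewrite csubst_id. auto. Qed.

Lemma Forall2_repeat : forall {A B} (R : A -> B -> Prop) x y n, R x y -> Forall2 R (repeat x n) (repeat y n).
Proof. induction n; intros; simpl; constructor; auto. Qed.

Lemma fact_case : forall SS psi n D pos i s,
  n < length psi ->
  (forall k' i, k' < length psi -> In i (res_premises (rjst psi k')) -> i < k') ->
  Inv SS psi (Mof psi) n D pos -> rjst psi n = RFact i s -> res_step_ok SS psi n ->
  exists D' pos', Inv SS psi (Mof psi) (S n) D' pos'.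
Proof.
  intros SS psi n D pos i s Hn Hlt HI Ej Hok.
  unfold res_step_ok in Hok. rewrite Ej in Hok.
  destruct Hok as [Hi [L [L' [HLne [HPi [Hunif [l [Hl HPn]]]]]]]].
  assert (Hipsi : i < length psi) by lia.
  set (M := Mof psi).
  set (G := l :: L').
  set (sF := mkS M Var s).
  set (BOT := (([] : clause), CUnitProp (repeat (length D) (length L) ++ seq (S (length D)) (length L')) (pos i) sF)).
  set (LN := (rcl psi n, CLearn (length D + S (length L')))).
  set (B := decs M s (length D) G ++ [BOT; LN]).
  assert (HI' := HI). destruct HI' as [I1 [I2 _]].
  assert (HPBD : PB D) by (eapply PB_of; eauto).
  destruct (I2 i Hi) as [Pi1 [Pi2 Pi3]].
  assert (HlenG : length (decs M s (length D) G) = S (length L')) by (rewrite decs_length; reflexivity).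
  assert (HlenD' : length (D ++ B) = length D + S (length L') + 2) by (unfold B; rewrite !length_app, HlenG; simpl; lia).
  assert (FD : forall m, m < S (length L') -> nth (length D + m) (D ++ B) dflt = ([decl M s (length D + m) (nth m G dl)], CDecide)).
  { intros m Hm. unfold B. rewrite nth_skip. rewrite app_nth1 by lia. apply decs_nth. simpl; lia. }
  assert (FBOT : nth (length D + S (length L')) (D ++ B) dflt = BOT).
  { unfold B. rewrite nth_skip. rewrite app_nth2 by lia.
    replace (S (length L') - length (decs M s (length D) G)) with 0 by lia. reflexivity. }
  assert (FLN : nth (length D + S (S (length L'))) (D ++ B) dflt = LN).
  { unfold B. rewrite nth_skip. rewrite app_nth2 by lia.
    replace (S (S (length L')) - length (decs M s (length D) G)) with 1 by lia. reflexivity. }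
  assert (Hnew : forall k, length D <= k < length (D ++ B) ->
     (exists m, m < S (length L') /\ k = length D + m) \/ k = length D + S (length L') \/ k = length D + S (S (length L'))).
  { intros k Hk. rewrite HlenD' in Hk.
    destruct (Nat.lt_ge_cases k (length D + S (length L'))).
    - left. exists (k - length D). split; lia.
    - right. lia. }
  assert (HPB : PB (D ++ B)).
  { intros k p Hp. destruct (Nat.lt_ge_cases k (length D)).
    - rewrite cjst_app in Hp by auto. apply HPBD in Hp. auto.
    - destruct (Nat.lt_ge_cases k (length (D ++ B))).
      + destruct (Hnew k ltac:(lia)) as [[m [Hm ->]]|[->| ->]]; unfold cjst in Hp.
        * rewrite FD in Hp by auto. simpl in Hp. contradiction.
        * rewrite FBOT in Hp. simpl in Hp. rewrite <- app_assoc in Hp.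
          apply in_app_or in Hp. destruct Hp as [Hp|Hp].
          -- apply repeat_spec in Hp. lia.
          -- apply in_app_or in Hp. destruct Hp as [Hp|[Hp|[]]].
             ++ apply in_seq in Hp. lia.
             ++ lia.
        * rewrite FLN in Hp. simpl in Hp. destruct Hp as [Hp|[]]. lia.
      + rewrite cjst_out in Hp by auto. simpl in Hp. contradiction. }
  assert (HbL : forall g, In g L -> lbounded M g).
  { intros g Hg. apply (bounded_of psi i (L ++ L')); auto. apply in_or_app; auto. }
  assert (HbL' : forall g, In g L' -> lbounded M g).
  { intros g Hg. apply (bounded_of psi i (L ++ L')); auto. apply in_or_app; auto. }
  assert (HopD : forall m, m < length G -> open_paths (D ++ B) (length D + m) = [decl M s (length D + m) (nth m G dl)]).
  { intros m Hm. rewrite op_unfold by auto. unfold cjst, ccl. rewrite FD by auto. reflexivity. }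
  assert (Hperm_us : Permutation (nodup Nat.eq_dec ((repeat (length D) (length L) ++ seq (S (length D)) (length L')) ++ [pos i]))
                                 (seq (length D) (length G) ++ [pos i])).
  { apply nodup_perm. apply NoDup_seq_app. lia.
    intros x. rewrite !in_app_iff. simpl. rewrite !in_seq. split.
    - intros [[Hx|Hx]|[Hx|[]]].
      + apply repeat_spec in Hx. lia.
      + lia.
      + auto.
    - intros [Hx|[Hx|[]]]; auto.
      destruct (Nat.eq_dec x (length D)) as [->|Hx'].
      + left. left. destruct L as [|a L]; [congruence|]. simpl. auto.
      + left. right. lia. }
  exists (D ++ B), (upd pos n (length (D ++ B) - 1)).
  assert (Hq : length (D ++ B) - 1 = length D + S (S (length L'))) by lia.
  apply extend; try rewrite Hq; auto.
  - unfold B. destruct (decs M s (length D) G); discriminate.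
  - intros p Hp. destruct (Hnew p ltac:(lia)) as [[m [Hm ->]]|[->| ->]];
      unfold cr_step_ok, cjst, ccl.
    + rewrite FD by auto. simpl. eauto.
    + rewrite FBOT. simpl. split; [|split].
      * apply Forall_app. split; apply Forall_forall; intros x Hx.
        -- apply repeat_spec in Hx. lia.
        -- apply in_seq in Hx. lia.
      * lia.
      * exists (repeat (decl M s (length D) l) (length L) ++ decls M s (S (length D)) L'),
           (map dual (L ++ L')), []. split; [simpl; lia|]. split; [|split; [|split]].
        -- apply Forall2_app.
           ++ assert (Hd0 : ccl (D ++ B) (length D) = [decl M s (length D) l]).
              { unfold ccl. rewrite <- (Nat.add_0_r (length D)) at 1. rewrite FD by lia.
                rewrite Nat.add_0_r. reflexivity. }
              apply Forall2_repeat. exact Hd0.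
           ++ apply seq_decls_F2. intros m Hm. fold (ccl (D ++ B) (S (length D) + m)).
              unfold ccl. replace (S (length D) + m) with (length D + S m) by lia.
              rewrite FD by lia. reflexivity.
        -- fold (ccl (D ++ B) (pos i)). rewrite ccl_app by auto. rewrite Pi2.
           rewrite map_dual_dual, app_nil_r. auto.
        -- rewrite map_app. apply Forall2_app.
           ++ rewrite <- (length_map dual L). apply repeat_F2. intros y Hy.
              apply in_map_iff in Hy. destruct Hy as [a [<- Ha]]. unfold unifies, sF.
              rewrite mkS_decl, lsubst_dual, mkS_low by auto. rewrite (Hunif a l); auto.
           ++ apply decls_Forall2. intros p g Hg. unfold unifies.
              unfold sF. rewrite mkS_decl, lsubst_dual, mkS_low by auto. reflexivity.
        -- simpl. auto.
    + rewrite FLN. simpl. split. lia. split.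
      * fold (ccl (D ++ B) (length D + S (length L'))). unfold ccl. rewrite FBOT. reflexivity.
      * apply variant_id. rewrite op_unfold by auto. unfold cjst. rewrite FBOT. cbn [snd].
        eapply Permutation_trans. apply Permutation_map. apply Permutation_map.
        apply Permutation_flat_map. exact Hperm_us.
        rewrite flat_map_app. simpl flat_map at 2.
        rewrite (main_op (D ++ B) (pos i)) by (auto; unfold is_main; rewrite cjst_app; auto).
        rewrite !app_nil_r. rewrite seq_decls_fm with (M := M) (s := s) by auto.
        rewrite map_map. rewrite decls_map with (H := lsubst s).
        -- apply Permutation_sym. exact HPn.
        -- intros p g Hg. unfold sF. rewrite mkS_decl, dual_dual, lsubst_id. reflexivity.
  - unfold ccl. rewrite FLN. reflexivity.
  - right. exists (length D + S (length L')). unfold cjst. rewrite FLN. reflexivity.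
  - intros p Hp. destruct (Hnew p ltac:(lia)) as [[m [Hm ->]]|[->| ->]].
    + unfold aux_vars, ccl. rewrite FD by auto. intros x Hx. simpl in Hx. rewrite Bool.orb_false_r in Hx.
      eapply occurs_decl; eauto.
    + unfold aux_vars, ccl. rewrite FBOT. simpl. discriminate.
    + lia.
  - intros p Hp. destruct (Hnew p ltac:(lia)) as [[m [Hm ->]]|[->| ->]].
    + exists (length D + S (length L')). split. lia. unfold cjst. rewrite FBOT. simpl.
      apply in_or_app. left. apply in_or_app. destruct m.
      * left. rewrite Nat.add_0_r. destruct L as [|a L]; [congruence|]. simpl. auto.
      * right. apply in_seq. lia.
    + exists (length D + S (S (length L'))). split. lia. unfold cjst. rewrite FLN. simpl. auto.
    + lia.
  - intros i0 Hi0. rewrite Ej in Hi0. simpl in Hi0. destruct Hi0 as [<-|[]].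
    exists (length D + S (length L')). split. lia. unfold cjst. rewrite FBOT. simpl.
    apply in_or_app. right. simpl. auto.
  - unfold B. rewrite cr_length_app, decs_cr_length. unfold cr_length, res_length. simpl.
    unfold rjst in Ej. rewrite Ej. simpl. lia.
  - unfold B. rewrite cr_size_app, decs_cr_size. unfold cr_size, res_size. simpl.
    apply Permutation_length in HPn. simpl in HPn. unfold csubst in HPn. rewrite length_map in HPn.
    unfold rcl, clause in *. simpl in HPn. lia.
Qed.

Lemma res_conf : forall SS psi n D pos i j s l l',
  n < length psi ->
  (forall k' i, k' < length psi -> In i (res_premises (rjst psi k')) -> i < k') ->
  Inv SS psi (Mof psi) n D pos -> rjst psi n = RRes i j s ->
  i < n -> j < n ->
  Permutation (rcl psi i) ([] ++ [l]) -> Permutation (rcl psi j) [dual l'] ->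
  unifies s l l' -> Permutation (rcl psi n) (csubst s ([] ++ [])) ->
  exists D' pos', Inv SS psi (Mof psi) (S n) D' pos'.
Proof.
  intros SS psi n D pos i j s l l' Hn Hlt HI Ej Hi Hj HPi HPj Hu HPn.
  set (BOT := (([] : clause), CConflict (pos i) (pos j) s)).
  set (LN := (rcl psi n, CLearn (length D))).
  set (B := [BOT; LN]).
  assert (HI' := HI). destruct HI' as [I1 [I2 _]].
  assert (HPBD : PB D) by (eapply PB_of; eauto).
  destruct (I2 i Hi) as [Pi1 [Pi2 Pi3]].
  destruct (I2 j Hj) as [Pj1 [Pj2 Pj3]].
  assert (HlenD' : length (D ++ B) = length D + 2) by (unfold B; rewrite length_app; simpl; lia).
  assert (FBOT : nth (length D) (D ++ B) dflt = BOT).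
  { rewrite <- (Nat.add_0_r (length D)) at 1. rewrite nth_skip. reflexivity. }
  assert (FLN : nth (length D + 1) (D ++ B) dflt = LN).
  { rewrite nth_skip. reflexivity. }
  assert (HPB : PB (D ++ B)).
  { intros k p Hp. destruct (Nat.lt_ge_cases k (length D)).
    - rewrite cjst_app in Hp by auto. apply HPBD in Hp. auto.
    - destruct (Nat.lt_ge_cases k (length (D ++ B))).
      + assert (k = length D \/ k = length D + 1) as [->| ->] by lia; unfold cjst in Hp.
        * rewrite FBOT in Hp. simpl in Hp. destruct Hp as [<-|[<-|[]]]; lia.
        * rewrite FLN in Hp. simpl in Hp. destruct Hp as [<-|[]]. lia.
      + rewrite cjst_out in Hp by auto. simpl in Hp. contradiction. }
  exists (D ++ B), (upd pos n (length (D ++ B) - 1)).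
  assert (Hq : length (D ++ B) - 1 = length D + 1) by lia.
  apply extend; try rewrite Hq; auto.
  - discriminate.
  - intros p Hp. assert (p = length D \/ p = length D + 1) as [->| ->] by lia;
      unfold cr_step_ok, cjst, ccl.
    + rewrite FBOT. simpl. split. lia. split. lia. exists l, l'.
      fold (ccl (D ++ B) (pos i)). fold (ccl (D ++ B) (pos j)).
      rewrite !ccl_app by auto. rewrite Pi2, Pj2.
      split. apply Permutation_length_1_inv. apply Permutation_sym. exact HPi.
      split. apply Permutation_length_1_inv. apply Permutation_sym. exact HPj.
      auto.
    + rewrite FLN. simpl. split. lia. split.
      * fold (ccl (D ++ B) (length D)). unfold ccl. rewrite FBOT. reflexivity.
      * apply variant_id. rewrite op_unfold by auto. unfold cjst. rewrite FBOT. cbn [snd].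
        unfold BOT; cbn [snd]. rewrite flat_map_nil. simpl. apply Permutation_sym. exact HPn.
        intros x Hx. apply nodup_In in Hx. destruct Hx as [<-|[<-|[]]];
          apply main_op; auto; unfold is_main; rewrite cjst_app; auto.
  - unfold ccl. rewrite FLN. reflexivity.
  - right. exists (length D). unfold cjst. rewrite FLN. reflexivity.
  - intros p Hp. assert (p = length D) as -> by lia. unfold aux_vars, ccl. rewrite FBOT.
    simpl. discriminate.
  - intros p Hp. assert (p = length D) as -> by lia. exists (length D + 1). split. lia.
    unfold cjst. rewrite FLN. simpl. auto.
  - intros i0 Hi0. rewrite Ej in Hi0. exists (length D). split. lia. unfold cjst. rewrite FBOT.
    simpl in *. destruct Hi0 as [<-|[<-|[]]]; auto.
  - unfold B. unfold cr_length, res_length. simpl. unfold rjst in Ej. rewrite Ej. simpl. lia.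
  - unfold B. unfold cr_size, res_size. simpl. apply Permutation_length in HPn. simpl in HPn.
    unfold rcl, clause in *. lia.
Qed.

Lemma res_gen : forall SS psi n D pos i j s Gam l l' Del,
  n < length psi ->
  (forall k' i, k' < length psi -> In i (res_premises (rjst psi k')) -> i < k') ->
  Inv SS psi (Mof psi) n D pos -> rjst psi n = RRes i j s ->
  i < n -> j < n ->
  Permutation (rcl psi i) (Gam ++ [l]) -> Permutation (rcl psi j) (dual l' :: Del) ->
  unifies s l l' -> Permutation (rcl psi n) (csubst s (Gam ++ Del)) ->
  1 <= length Gam + length Del ->
  exists D' pos', Inv SS psi (Mof psi) (S n) D' pos'.
Proof.
  intros SS psi n D pos i j s Gam l l' Del Hn Hlt HI Ej Hi Hj HPi HPj Hu HPn Hne.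
  set (M := Mof psi).
  set (sA := mkS M (frs M (length D + length Gam)) s).
  set (sB := mkS M Var s).
  set (UA := ([lsubst sA l], CUnitProp (seq (length D) (length Gam)) (pos i) sA)).
  set (UB := (([] : clause), CUnitProp (seq (length D + length Gam) (S (length Del))) (pos j) sB)).
  set (LN := (rcl psi n, CLearn (S (length D + length Gam) + length Del))).
  set (B := decs M s (length D) Gam ++ UA :: (decs M s (S (length D + length Gam)) Del ++ [UB; LN])).
  assert (HI' := HI). destruct HI' as [I1 [I2 _]].
  assert (HPBD : PB D) by (eapply PB_of; eauto).
  destruct (I2 i Hi) as [Pi1 [Pi2 Pi3]].
  destruct (I2 j Hj) as [Pj1 [Pj2 Pj3]].
  assert (Hipsi : i < length psi) by lia.
  assert (Hjpsi : j < length psi) by lia.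
  assert (HbG : forall g, In g Gam -> lbounded M g).
  { intros g Hg. apply (bounded_of psi i (Gam ++ [l])); auto. apply in_or_app; auto. }
  assert (Hbl : lbounded M l).
  { apply (bounded_of psi i (Gam ++ [l])); auto. apply in_or_app; simpl; auto. }
  assert (HbD : forall g, In g Del -> lbounded M g).
  { intros g Hg. apply (bounded_of psi j (dual l' :: Del)); auto. simpl; auto. }
  assert (Hbl' : lbounded M l').
  { intros x Hx. apply (bounded_of psi j (dual l' :: Del) (dual l')); simpl; auto. }
  assert (HlG : length (decs M s (length D) Gam) = length Gam) by apply decs_length.
  assert (HlD : length (decs M s (S (length D + length Gam)) Del) = length Del) by apply decs_length.
  assert (HlenD' : length (D ++ B) = length D + length Gam + length Del + 3)
    by (unfold B; rewrite !length_app; simpl; rewrite length_app, HlG, HlD; simpl; lia).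
  assert (FDG : forall m, m < length Gam -> nth (length D + m) (D ++ B) dflt =
            ([decl M s (length D + m) (nth m Gam dl)], CDecide)).
  { intros m Hm. unfold B. rewrite nth_skip. rewrite app_nth1 by lia. apply decs_nth. lia. }
  assert (FUA : nth (length D + length Gam) (D ++ B) dflt = UA).
  { unfold B. rewrite nth_skip. rewrite app_nth2 by lia.
    replace (length Gam - length (decs M s (length D) Gam)) with 0 by lia. reflexivity. }
  assert (FDD : forall m, m < length Del -> nth (S (length D + length Gam) + m) (D ++ B) dflt =
            ([decl M s (S (length D + length Gam) + m) (nth m Del dl)], CDecide)).
  { intros m Hm. unfold B. replace (S (length D + length Gam) + m) with (length D + (length Gam + S m)) at 1 by lia.
    rewrite nth_skip. rewrite app_nth2 by lia.
    replace (length Gam + S m - length (decs M s (length D) Gam)) with (S m) by lia. cbn [nth].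
    rewrite app_nth1 by lia. apply decs_nth. lia. }
  assert (FUB : nth (S (length D + length Gam) + length Del) (D ++ B) dflt = UB).
  { unfold B. replace (S (length D + length Gam) + length Del) with (length D + (length Gam + S (length Del))) by lia.
    rewrite nth_skip. rewrite app_nth2 by lia.
    replace (length Gam + S (length Del) - length (decs M s (length D) Gam)) with (S (length Del)) by lia. cbn [nth].
    rewrite app_nth2 by lia. rewrite HlD, Nat.sub_diag. reflexivity. }
  assert (FLN : nth (S (S (length D + length Gam) + length Del)) (D ++ B) dflt = LN).
  { unfold B. replace (S (S (length D + length Gam) + length Del)) with (length D + (length Gam + S (S (length Del)))) by lia.
    rewrite nth_skip. rewrite app_nth2 by lia.
    replace (length Gam + S (S (length Del)) - length (decs M s (length D) Gam)) with (S (S (length Del))) by lia. cbn [nth].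
    rewrite app_nth2 by lia. rewrite HlD. replace (S (length Del) - length Del) with 1 by lia. reflexivity. }
  assert (Hnew : forall k, length D <= k < length (D ++ B) ->
     (exists m, m < length Gam /\ k = length D + m) \/ k = length D + length Gam \/
     (exists m, m < length Del /\ k = S (length D + length Gam) + m) \/
     k = S (length D + length Gam) + length Del \/ k = S (S (length D + length Gam) + length Del)).
  { intros k Hk. rewrite HlenD' in Hk.
    destruct (Nat.lt_ge_cases k (length D + length Gam)).
    - left. exists (k - length D). split; lia.
    - right. destruct (Nat.eq_dec k (length D + length Gam)). left; auto. right.
      destruct (Nat.lt_ge_cases k (S (length D + length Gam) + length Del)).
      + left. exists (k - S (length D + length Gam)). split; lia.
      + right. lia. }
  assert (HPB : PB (D ++ B)).
  { intros k p Hp. destruct (Nat.lt_ge_cases k (length D)).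
    - rewrite cjst_app in Hp by auto. apply HPBD in Hp. auto.
    - destruct (Nat.lt_ge_cases k (length (D ++ B))).
      + destruct (Hnew k ltac:(lia)) as [[m [Hm ->]]|[->|[[m [Hm ->]]|[->| ->]]]]; unfold cjst in Hp.
        * rewrite FDG in Hp by auto. simpl in Hp. contradiction.
        * rewrite FUA in Hp. unfold UA in Hp; simpl in Hp. apply in_app_or in Hp.
          destruct Hp as [Hp|[Hp|[]]]. apply in_seq in Hp. lia. lia.
        * rewrite FDD in Hp by auto. simpl in Hp. contradiction.
        * rewrite FUB in Hp. unfold UB in Hp; cbn [snd cr_premises] in Hp. apply in_app_or in Hp.
          destruct Hp as [Hp|[Hp|[]]]. apply in_seq in Hp. lia. lia.
        * rewrite FLN in Hp. simpl in Hp. destruct Hp as [Hp|[]]. lia.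
      + rewrite cjst_out in Hp by auto. simpl in Hp. contradiction. }
  assert (HsAl : lsubst sA l = lsubst (frs M (length D + length Gam)) (lsubst s l))
    by (unfold sA; apply mkS_low; auto).
  assert (HopUA : open_paths (D ++ B) (length D + length Gam) = map (lsubst sA) (decls M s (length D) Gam)).
  { rewrite op_unfold by auto. unfold cjst. rewrite FUA. unfold UA. cbn [snd].
    rewrite nodup_fixed_point by (apply NoDup_seq_app; lia).
    rewrite flat_map_app. simpl flat_map at 2.
    rewrite (main_op (D ++ B) (pos i)) by (auto; unfold is_main; rewrite cjst_app; auto).
    rewrite !app_nil_r. f_equal. apply seq_decls_fm. intros m Hm.
    rewrite op_unfold by auto. unfold cjst, ccl. rewrite FDG by auto. reflexivity. }
  assert (HopDD : flat_map (open_paths (D ++ B)) (seq (S (length D + length Gam)) (length Del)) =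
                  decls M s (S (length D + length Gam)) Del).
  { apply seq_decls_fm. intros m Hm.
    rewrite op_unfold by auto. unfold cjst, ccl. rewrite FDD by auto. reflexivity. }
  exists (D ++ B), (upd pos n (length (D ++ B) - 1)).
  assert (Hq : length (D ++ B) - 1 = S (S (length D + length Gam) + length Del)) by lia.
  apply extend; try rewrite Hq; auto.
  - unfold B. destruct (decs M s (length D) Gam); discriminate.
  - intros p Hp. destruct (Hnew p ltac:(lia)) as [[m [Hm ->]]|[->|[[m [Hm ->]]|[->| ->]]]];
      unfold cr_step_ok, cjst, ccl.
    + rewrite FDG by auto. simpl. eauto.
    + rewrite FUA. unfold UA. cbn [fst snd]. split; [|split].
      * apply Forall_forall. intros x Hx. apply in_seq in Hx. lia.
      * lia.
      * exists (decls M s (length D) Gam), (map dual Gam), [l]. split; [simpl; lia|].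
        split; [|split; [|split]].
        -- apply seq_decls_F2. intros m Hm. fold (ccl (D ++ B) (length D + m)).
           unfold ccl. rewrite FDG by auto. reflexivity.
        -- fold (ccl (D ++ B) (pos i)). rewrite ccl_app by auto. rewrite Pi2.
           rewrite map_dual_dual. auto.
        -- apply decls_Forall2. intros p g Hg. unfold unifies, sA.
           rewrite mkS_decl, lsubst_dual, mkS_low by auto. reflexivity.
        -- simpl. auto.
    + rewrite FDD by auto. simpl. eauto.
    + rewrite FUB. unfold UB. cbn [fst snd]. split; [|split].
      * apply Forall_forall. intros x Hx. apply in_seq in Hx. lia.
      * lia.
      * exists (lsubst sA l :: decls M s (S (length D + length Gam)) Del), (l' :: map dual Del), [].
        split; [simpl; lia|]. split; [|split; [|split]].
        -- cbn [seq]. constructor.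
           ++ fold (ccl (D ++ B) (length D + length Gam)). unfold ccl. rewrite FUA. reflexivity.
           ++ apply seq_decls_F2. intros m Hm. fold (ccl (D ++ B) (S (length D + length Gam) + m)).
              unfold ccl. rewrite FDD by auto. reflexivity.
        -- fold (ccl (D ++ B) (pos j)). rewrite ccl_app by auto. rewrite Pj2.
           cbn [map]. rewrite map_dual_dual, app_nil_r. auto.
        -- constructor.
           ++ unfold unifies. rewrite HsAl. unfold sB. rewrite mkS_fr, lsubst_id, mkS_low by auto.
              rewrite lsubst_id. exact Hu.
           ++ apply decls_Forall2. intros p g Hg. unfold unifies, sB.
              rewrite mkS_decl, lsubst_dual, mkS_low by auto. reflexivity.
        -- simpl. auto.
    + rewrite FLN. unfold LN. cbn [fst snd]. split. lia. split.
      * rewrite FUB. reflexivity.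
      * apply variant_id. rewrite op_unfold by auto. unfold cjst. rewrite FUB. unfold UB. cbn [snd].
        rewrite nodup_fixed_point by (apply NoDup_seq_app; lia).
        rewrite flat_map_app. cbn [seq flat_map]. rewrite HopUA, HopDD.
        rewrite (main_op (D ++ B) (pos j)) by (auto; unfold is_main; rewrite cjst_app; auto).
        rewrite !app_nil_r. rewrite !map_app, !map_map.
        rewrite decls_map with (H := lsubst s).
        rewrite decls_map with (H := lsubst s).
        -- apply Permutation_sym. unfold csubst in HPn. rewrite map_app in HPn. exact HPn.
        -- intros p g Hg. unfold sB. rewrite mkS_decl, dual_dual, lsubst_id. reflexivity.
        -- intros p g Hg. unfold sA, sB. rewrite mkS_decl, lsubst_dual, mkS_fr, dual_dual, lsubst_id.
           reflexivity.
  - unfold ccl. rewrite FLN. reflexivity.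
  - right. eexists. unfold cjst. rewrite FLN. reflexivity.
  - intros p Hp. destruct (Hnew p ltac:(lia)) as [[m [Hm ->]]|[->|[[m [Hm ->]]|[->| ->]]]].
    + unfold aux_vars, ccl. rewrite FDG by auto. intros x Hx. simpl in Hx.
      rewrite Bool.orb_false_r in Hx. eapply occurs_decl; eauto.
    + unfold aux_vars, ccl. rewrite FUA. unfold UA. cbn [fst]. intros x Hx. simpl in Hx.
      rewrite Bool.orb_false_r in Hx. rewrite HsAl in Hx. apply occurs_lsubst in Hx.
      destruct Hx as [y [_ Hy]]. simpl in Hy. apply Nat.eqb_eq in Hy. subst.
      split. unfold fr; lia. apply tag_fr.
    + unfold aux_vars, ccl. rewrite FDD by auto. intros x Hx. simpl in Hx.
      rewrite Bool.orb_false_r in Hx. eapply occurs_decl; eauto.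
    + unfold aux_vars, ccl. rewrite FUB. simpl. discriminate.
    + lia.
  - intros p Hp. destruct (Hnew p ltac:(lia)) as [[m [Hm ->]]|[->|[[m [Hm ->]]|[->| ->]]]].
    + exists (length D + length Gam). split. lia. unfold cjst. rewrite FUA. unfold UA. simpl.
      apply in_or_app. left. apply in_seq. lia.
    + exists (S (length D + length Gam) + length Del). split. lia. unfold cjst. rewrite FUB.
      unfold UB. cbn [snd cr_premises seq]. simpl. auto.
    + exists (S (length D + length Gam) + length Del). split. lia. unfold cjst. rewrite FUB.
      unfold UB. cbn [snd cr_premises seq]. simpl. right. apply in_or_app. left. apply in_seq. lia.
    + exists (S (S (length D + length Gam) + length Del)). split. lia. unfold cjst. rewrite FLN. simpl. auto.
    + lia.
  - intros i0 Hi0. rewrite Ej in Hi0. simpl in Hi0. destruct Hi0 as [<-|[<-|[]]].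
    + exists (length D + length Gam). split. lia. unfold cjst. rewrite FUA. unfold UA. simpl.
      apply in_or_app. right. simpl. auto.
    + exists (S (length D + length Gam) + length Del). split. lia. unfold cjst. rewrite FUB.
      unfold UB. cbn [snd cr_premises]. apply in_or_app. right. simpl. auto.
  - unfold B. rewrite cr_length_app, decs_cr_length.
    change (UA :: decs M s (S (length D + length Gam)) Del ++ [UB; LN]) with
      ([UA] ++ decs M s (S (length D + length Gam)) Del ++ [UB; LN]).
    rewrite !cr_length_app, decs_cr_length. unfold cr_length, res_length. simpl.
    unfold rjst in Ej. rewrite Ej. simpl. lia.
  - unfold B. rewrite cr_size_app, decs_cr_size.
    change (UA :: decs M s (S (length D + length Gam)) Del ++ [UB; LN]) with
      ([UA] ++ decs M s (S (length D + length Gam)) Del ++ [UB; LN]).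
    rewrite !cr_size_app, decs_cr_size. unfold cr_size, res_size. simpl.
    apply Permutation_length in HPn. unfold csubst in HPn. rewrite length_map, length_app in HPn.
    unfold rcl, clause in *. lia.
Qed.

Lemma res_case : forall SS psi n D pos i j s,
  n < length psi ->
  (forall k' i, k' < length psi -> In i (res_premises (rjst psi k')) -> i < k') ->
  Inv SS psi (Mof psi) n D pos -> rjst psi n = RRes i j s -> res_step_ok SS psi n ->
  exists D' pos', Inv SS psi (Mof psi) (S n) D' pos'.
Proof.
  intros SS psi n D pos i j s Hn Hlt HI Ej Hok.
  unfold res_step_ok in Hok. rewrite Ej in Hok.
  destruct Hok as [Hi [Hj [Gam [l [l' [Del [HPi [HPj [Hu HPn]]]]]]]]].
  destruct Gam as [|g Gam]; [destruct Del as [|e Del]|].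
  - eapply res_conf; eauto.
  - eapply res_gen; eauto. simpl; lia.
  - eapply res_gen; eauto. simpl; lia.
Qed.

Theorem theorem1 :
  exists K : nat,
    forall (S : list clause) (c : clause) (psi : res_deriv),
      is_res_derivation S c psi ->
      exists phi : cr_deriv,
        is_cr_proof S c phi /\
        cr_length phi <= K * res_length psi /\
        cr_size phi <= K * res_size psi.
Proof.
  exists 3. intros SS c psi [Hne [Hok [Hdis [Hsink Hc]]]].
  assert (Hlt : forall k' i, k' < length psi -> In i (res_premises (rjst psi k')) -> i < k').
  { intros k' i Hk Hi. specialize (Hok k' Hk). unfold res_step_ok in Hok.
    destruct (rjst psi k'); simpl in Hi.
    - contradiction.
    - destruct Hok as [H1 [H2 _]]. destruct Hi as [->|[->|[]]]; auto.
    - destruct Hok as [H1 _]. destruct Hi as [->|[]]; auto. }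
  assert (Hind : forall n, n <= length psi -> exists D pos, Inv SS psi (Mof psi) n D pos).
  { induction n; intros Hn.
    - exists [], (fun _ => 0). unfold Inv. simpl.
      repeat split; intros; try lia; reflexivity.
    - destruct IHn as [D [pos HI]]. lia.
      assert (Hn' : n < length psi) by lia.
      destruct (rjst psi n) eqn:Ej.
      + eapply leaf_case; eauto.
      + eapply res_case; eauto.
      + eapply fact_case; eauto. }
  destruct (Hind (length psi) (le_n _)) as [D [pos [I1 [I2 [I3 [I4 [I5 [I6 [I7 I8]]]]]]]]].
  assert (Hlen : 0 < length psi) by (destruct psi; simpl; [congruence|lia]).
  assert (HPB : PB D) by (eapply PB_of; eauto).
  destruct (I2 (length psi - 1) ltac:(lia)) as [J1 [J2 J3]].
  rewrite (I6 Hlen) in J1, J2, J3.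
  rewrite firstn_all in I7, I8.
  exists D. split; [|split; auto].
  split.
  - split; [|split; [|split; [|split]]].
    + destruct D; simpl in J1; [lia|discriminate].
    + auto.
    + intros k1 k2 x Hk1 Hk2 Hne12 Hx1.
      destruct (occurs_clause x (ccl D k2)) eqn:Hx2; auto. exfalso.
      destruct (I3 k1 Hk1) as [[m1 [Hm1 ->]]|A1]; destruct (I3 k2 Hk2) as [[m2 [Hm2 ->]]|A2].
      * destruct (I2 m1 Hm1) as [_ [E1 _]]. destruct (I2 m2 Hm2) as [_ [E2 _]].
        rewrite E1 in Hx1. rewrite E2 in Hx2.
        assert (m1 <> m2) by (intro; subst; auto).
        rewrite (Hdis m1 m2 x Hm1 Hm2 H Hx1) in Hx2. discriminate.
      * destruct (I2 m1 Hm1) as [_ [E1 _]]. rewrite E1 in Hx1.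
        apply Mof_bound in Hx1; auto. apply A2 in Hx2. lia.
      * destruct (I2 m2 Hm2) as [_ [E2 _]]. rewrite E2 in Hx2.
        apply Mof_bound in Hx2; auto. apply A1 in Hx1. lia.
      * apply A1 in Hx1. apply A2 in Hx2. destruct Hx1 as [_ T1]. destruct Hx2 as [_ T2].
        congruence.
    + intros k Hk. destruct (I4 k ltac:(lia)) as [[m [Hm ->]]|H]; auto.
      destruct (Nat.eq_dec m (length psi - 1)) as [->|Hm'].
      * rewrite (I6 Hlen) in Hk. lia.
      * destruct (Hsink m ltac:(lia)) as [k' [Hk' Hin]].
        apply (I5 k' Hk' m Hin).
    + rewrite J2. auto.
  - apply main_op; auto.
Qed.
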